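(* Let $P^\ast$ be an $n\times k$ minimal matrix representation of a $0/1$-polytope with $k$ vertices. Then for each $j\in\{1,\dots,k-1\}$, the submatrix $P_j^\ast$ of $P^\ast$ consisting of its $j$ leftmost columns is a minimal matrix representation of a $0/1$-polytope with $j$ vertices.
   Context: For $x\in\{0,1\}^n$ its column number is $v_n^\top x$ with $v_n^\top=(2^0,2^1,\dots,2^{n-1})$. For an $n\times m$ $0/1$-matrix $P$ with pairwise distinct columns, $\nu(P)$ is the vector of its column numbers sorted increasingly. $P$ is a minimal matrix representation (of the $0/1$-polytope whose vertices are its columns) if its column numbers $v_n^\top P$ are strictly increasing from left to right and $\nu(P)\preceq\nu(Q)$ in lexicographic order for every matrix $Q$ obtained from $P$ by complementing (exchanging $0\leftrightarrow1$) the entries of some subset of its rows and then permuting its rows. *)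

(* Defs.v *)
From mathcomp Require Import all_boot all_order all_fingroup all_algebra.
Set Implicit Arguments. Unset Strict Implicit. Unset Printing Implicit Defensive.

(* 0/1-matrices are boolean matrices: entry true = 1, false = 0. *)

(* column number v_n^T x = sum_i x_i 2^i (row i, 0-based, has weight 2^i) *)
Definition colnum (n m : nat) (P : 'M[bool]_(n, m)) (j : 'I_m) : nat :=
  \sum_(i < n) (P i j : nat) * 2 ^ i.

Definition colnums (n m : nat) (P : 'M[bool]_(n, m)) : seq nat :=
  [seq colnum P j | j <- enum 'I_m].

Definition nu (n m : nat) (P : 'M[bool]_(n, m)) : seq nat :=
  sort leq (colnums P).

Fixpoint lexle (s t : seq nat) : bool :=
  match s, t with
  | [::], _ => true
  | _ :: _, [::] => false
  | x :: s', y :: t' => (x < y) || ((x == y) && lexle s' t')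
  end.

Definition distinct_cols (n m : nat) (P : 'M[bool]_(n, m)) : bool :=
  [forall j1 : 'I_m, forall j2 : 'I_m, (j1 != j2) ==> (col j1 P != col j2 P)].

Definition flip_perm (n m : nat) (S : {set 'I_n}) (s : 'S_n)
    (P : 'M[bool]_(n, m)) : 'M[bool]_(n, m) :=
  \matrix_(i < n, j < m) (P (s i) j (+) (s i \in S)).

Definition minimal_rep (n m : nat) (P : 'M[bool]_(n, m)) : Prop :=
  [/\ distinct_cols P,
      (forall j1 j2 : 'I_m, j1 < j2 -> colnum P j1 < colnum P j2) &
      (forall (S : {set 'I_n}) (s : 'S_n), lexle (nu P) (nu (flip_perm S s P)))].

Definition leftcols (n m j : nat) (hj : j <= m) (P : 'M[bool]_(n, m))
  : 'M[bool]_(n, j) := colsub (widen_ord hj) P.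

(* Main.v *)
Require Import Defs.
From mathcomp Require Import all_boot all_order all_fingroup all_algebra.

Lemma sorted_count_nth (d : seq nat) v t :
  sorted leq d -> t < count (fun x => x <= v) d -> nth 0 d t <= v.
Proof.
elim: d t => [|x d IH] [|t] //= hs hc.
- have hp := order_path_min leq_trans hs.
  case: (boolP (x <= v)) => // hxv; exfalso.
  move: hc; rewrite /= (negbTE hxv) add0n.
  have -> : count (fun y => y <= v) d = 0.
    apply/eqP; rewrite -leqn0 leqNgt -has_count; apply/hasPn => y hy.
    move/allP: hp => /(_ y hy) hxy; apply/negP => hyv.
    by move: hxv; rewrite (leq_trans hxy hyv).
  by [].
- apply: IH; first exact: path_sorted hs.
  move: hc; case: (x <= v); rewrite /= ?add1n ?add0n // => hc; exact: ltnW.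
Qed.

Lemma sorted_nth_count (e : seq nat) t :
  sorted leq e -> t < size e -> t < count (fun x => x <= nth 0 e t) e.
Proof.
elim: e t => [|x e IH] [|t] //= hs ht.
- by rewrite leqnn.
- have hp := order_path_min leq_trans hs.
  have h1 : x <= nth 0 e t by move/allP: hp; apply; apply: mem_nth.
  rewrite h1 add1n ltnS; exact: IH (path_sorted hs) ht.
Qed.

Lemma lex_take (c d e : seq nat) j :
  size e = j -> (forall t, t < j -> nth 0 d t <= nth 0 e t) ->
  lexle c d -> lexle (take j c) e.
Proof.
elim: c d e j => [|x c IH] d e [|j] //= hs hp.
case: e hs hp => [|y e] //= [hs] hp.
case: d hp => [|z d] //= hp /orP [hxz | /andP [/eqP hxz hl]].
- by rewrite (leq_trans hxz (hp 0 isT)).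
- subst z; have := hp 0 isT; rewrite /= leq_eqVlt => /orP [/eqP <-|->] //.
  rewrite eqxx ltnn /=; apply: IH hl => //.
  by move=> t ht; exact: (hp t.+1 ht).
Qed.

Lemma colnum_left n k j (h : j <= k) (M : 'M[bool]_(n, k)) (o : 'I_j) :
  colnum (leftcols h M) o = colnum M (widen_ord h o).
Proof. by apply: eq_bigr => i _; rewrite /leftcols mxE. Qed.

Lemma colnums_left n k j (h : j <= k) (M : 'M[bool]_(n, k)) :
  colnums (leftcols h M) = take j (colnums M).
Proof.
pose G := fun t : nat => if @insub _ (fun x => x < k) 'I_k t is Some o then colnum M o else 0.
have E : colnums M = map G (iota 0 k).
  rewrite /colnums -val_enum_ord -map_comp; apply: eq_map => o /=.
  by rewrite /G valK.
have E2 : colnums (leftcols h M) = map G (iota 0 j).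
  rewrite /colnums -val_enum_ord -map_comp; apply: eq_map => o /=.
  rewrite colnum_left.
  have -> : (o : nat) = val (widen_ord h o) by [].
  by rewrite /G valK.
by rewrite E E2 -map_take take_iota (minn_idPl h).
Qed.

Lemma flip_left n k j (h : j <= k) (M : 'M[bool]_(n, k)) S s :
  flip_perm S s (leftcols h M) = leftcols h (flip_perm S s M).
Proof. by apply/matrixP => a b; rewrite /leftcols !mxE. Qed.

Theorem lemma4p10 (n k : nat) (P : 'M[bool]_(n, k)) (j : nat)
    (hj1 : 0 < j) (hjk : j < k) :
  minimal_rep P -> minimal_rep (leftcols (ltnW hjk) P).
Proof.
case=> dc inc mn.
set h := ltnW hjk.
have hsort : sorted leq (colnums P).
  rewrite /colnums sorted_map.
  have : sorted (relpre val leq) (enum 'I_k).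
    by rewrite -sorted_map val_enum_ord iota_sorted.
  apply: sub_sorted => a b /=; rewrite leq_eqVlt => /orP [/eqP hab|hab].
  + by have -> : a = b by apply: val_inj.
  + exact: ltnW (inc _ _ hab).
split.
- apply/forallP => a; apply/forallP => b; apply/implyP => hab.
  move/forallP: dc => /(_ (widen_ord h a)) /forallP /(_ (widen_ord h b)).
  have -> : (widen_ord h a != widen_ord h b).
    by apply: contra hab => /eqP [] hv; apply/eqP/val_inj.
  move=> /= hc; apply: contra hc => /eqP hc; apply/eqP.
  apply/matrixP => x y; move/matrixP: hc => /(_ x y).
  by rewrite /leftcols !mxE.
- by move=> a b hab; rewrite !colnum_left; apply: inc.
- move=> S s.
  rewrite flip_left /nu !colnums_left (sorted_sort leq_trans (take_sorted _ hsort)).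
  have := mn S s; rewrite /nu (sorted_sort leq_trans hsort).
  apply: lex_take.
  + by rewrite size_sort size_take /colnums size_map size_enum_ord hjk.
  + move=> t ht.
    set Q := flip_perm S s P.
    set e := sort leq (take j (colnums Q)).
    have hse : size e = j by rewrite size_sort size_take /colnums size_map size_enum_ord hjk.
    apply: sorted_count_nth; first exact: sort_sorted leq_total _.
    rewrite count_sort.
    have hc := @sorted_nth_count e t (sort_sorted leq_total _).
    rewrite hse in hc; apply: (leq_trans (hc ht)).
    rewrite /e count_sort.
    set u := colnums Q; set p := (fun x => _).
    have := count_cat p (take j u) (drop j u); rewrite cat_take_drop => ->.
    exact: leq_addr.
Qed.
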